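(* Let $u$ be a word of length $n\ge1$ and let $\mathsf{C}[1..n]$ be its cover array. Then $$\mathrm{lseed}(u)=\min\{\mathsf{C}[j] : \mathrm{per}(u)\le j\le n\}.$$
   Context: Positions in $u$ are numbered $1,\dots,n$; $u[i..j]=u_i\cdots u_j$. For a nonempty word $x$, $\mathrm{per}(x)$ is the smallest positive integer $p$ with $x_i=x_{i+p}$ for all $1\le i\le|x|-p$. A word $s$ covers $w$ if every position of $w$ lies in some occurrence of $s$ in $w$. $\mathrm{cover}(x)$ is the length of the shortest word covering $x$, and the cover array is $\mathsf{C}[i]=\mathrm{cover}(u[1..i])$. A seed of $u$ is a factor $s$ of $u$ such that $u$ is a factor of some word covered by $s$; a left seed is a seed that is a prefix of $u$; $\mathrm{lseed}(u)$ is the length of the shortest left seed of $u$. *)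

(* Defs.v *)
From mathcomp Require Import all_boot.
From mathcomp Require Import boolp.

Set Implicit Arguments.
Unset Strict Implicit.
Unset Printing Implicit Defensive.

(* Words are sequences over an arbitrary alphabet T : eqType.
   Positions are 0-based in Rocq: 0-based position i is position i+1 of the paper. *)

Definition occurs (T : eqType) (s w : seq T) (j : nat) : bool :=
  (j + size s <= size w) && (take (size s) (drop j w) == s).

Definition covers (T : eqType) (s w : seq T) : Prop :=
  forall i, i < size w -> exists j, occurs s w j && (j <= i < j + size s).

Definition is_period (T : eqType) (x : seq T) (p : nat) : bool :=
  (0 < p) && all (fun i => onth x i == onth x (i + p)) (iota 0 (size x - p)).

Lemma is_period_ex (T : eqType) (x : seq T) : exists p, is_period x p.
Proof. by exists (size x).+1; rewrite /is_period /= subnS subnn. Qed.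

Definition per (T : eqType) (x : seq T) : nat := ex_minn (is_period_ex x).

Lemma covers_refl (T : eqType) (x : seq T) : covers x x.
Proof.
move=> i Hi; exists 0; rewrite /occurs add0n leqnn drop0 take_size eqxx /=.
by rewrite Hi.
Qed.

Lemma cover_ex (T : eqType) (x : seq T) :
  exists k, `[< exists s : seq T, size s = k /\ covers s x >].
Proof. by exists (size x); apply/asboolP; exists x; split=> //; apply: covers_refl. Qed.

Definition cover (T : eqType) (x : seq T) : nat := ex_minn (cover_ex x).

(* cover array: C[i] = cover (u[1..i]) *)
Definition cover_array (T : eqType) (u : seq T) (i : nat) : nat := cover (take i u).

Definition seed (T : eqType) (s u : seq T) : Prop :=
  infix s u /\ exists w : seq T, covers s w /\ infix u w.

Definition left_seed (T : eqType) (s u : seq T) : Prop := seed s u /\ prefix s u.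

Lemma lseed_ex (T : eqType) (u : seq T) :
  exists k, `[< exists s : seq T, size s = k /\ left_seed s u >].
Proof.
exists (size u); apply/asboolP; exists u; split=> //.
split; last exact: prefix_refl.
split; first exact: infix_refl.
by exists u; split; [apply: covers_refl | apply: infix_refl].
Qed.

Definition lseed (T : eqType) (u : seq T) : nat := ex_minn (lseed_ex u).

(* Main.v *)
Require Import Defs.
From mathcomp Require Import all_boot.
From mathcomp Require Import boolp.
From mathcomp Require Import zify.

Section Aux.
Variables (T : eqType) (x0 : T).

Lemma occursP (s w : seq T) j :
  occurs s w j <-> (j + size s <= size w /\
     forall t, t < size s -> nth x0 w (j+t) = nth x0 s t).
Proof.
rewrite /occurs; split.
- case/andP=> H /eqP E; split=> // t Ht.
  by rewrite -E nth_take // nth_drop.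
- case=> H E; apply/andP; split=> //; apply/eqP.
  have Hs : size (take (size s) (drop j w)) = size s.
    by rewrite size_takel // size_drop; lia.
  apply: (eq_from_nth (x0:=x0)); first by [].
  move=> t; rewrite Hs => Ht; rewrite nth_take // nth_drop; exact: E.
Qed.

Lemma coversP (s x : seq T) : covers s x <->
  (forall i, i < size x -> exists a, [/\ a + size s <= size x,
     (forall t, t < size s -> nth x0 x (a+t) = nth x0 s t) & a <= i < a + size s]).
Proof.
split.
- move=> H i Hi; have [a /andP [Ho Hb]] := H i Hi.
  by have [H1 H2] := (occursP s x a).1 Ho; exists a.
- move=> H i Hi; have [a [H1 H2 H3]] := H i Hi; exists a.
  by rewrite H3 andbT; apply/occursP.
Qed.

Lemma periodP (x : seq T) p : is_period x p ->
  forall i, i + p < size x -> nth x0 x i = nth x0 x (i+p).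
Proof.
case/andP=> _ /allP H i Hi.
have Hm : i \in iota 0 (size x - p) by rewrite mem_iota add0n; lia.
move: (H i Hm) => /eqP; rewrite !onthE !(nth_map x0); [|lia|lia].
by case.
Qed.

Lemma period_intro (x : seq T) p : 0 < p ->
  (forall i, i + p < size x -> nth x0 x i = nth x0 x (i+p)) -> is_period x p.
Proof.
move=> Hp H; apply/andP; split=> //; apply/allP=> i; rewrite mem_iota add0n=> /andP[_ Hi].
rewrite !onthE !(nth_map x0); [|lia|lia].
by rewrite H //; lia.
Qed.

Lemma per_spec (x : seq T) : is_period x (per x) /\ forall p, is_period x p -> per x <= p.
Proof. by rewrite /per; case: ex_minnP. Qed.

Lemma cover_le (x s : seq T) : covers s x -> Defs.cover x <= size s.
Proof.
move=> H; rewrite /Defs.cover; case: ex_minnP => m _ Hmin; apply: Hmin.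
by apply/asboolP; exists s.
Qed.

Lemma cover_spec (x : seq T) : exists s, size s = Defs.cover x /\ covers s x.
Proof.
by rewrite /Defs.cover; case: ex_minnP => m /asboolP [s [Hs Hc]] _; exists s.
Qed.

Lemma lseed_le (u s : seq T) : left_seed s u -> lseed u <= size s.
Proof.
move=> H; rewrite /lseed; case: ex_minnP => m _ Hmin; apply: Hmin.
by apply/asboolP; exists s.
Qed.

Lemma lseed_spec (u : seq T) : exists s, size s = lseed u /\ left_seed s u.
Proof.
by rewrite /lseed; case: ex_minnP => m /asboolP [s [Hs Hc]] _; exists s.
Qed.

Lemma covers_prefix (s x : seq T) : 0 < size x -> covers s x -> prefix s x.
Proof.
move=> Hx H; have [a /andP [Ho Hb]] := H 0 Hx.
have Ha : a = 0 by lia.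
by move: Ho; rewrite Ha /occurs drop0 prefixE => /andP[].
Qed.

Lemma prefix_nth (s u : seq T) : prefix s u -> forall i, i < size s -> nth x0 u i = nth x0 s i.
Proof. by rewrite prefixE => /eqP E i Hi; rewrite -E nth_take. Qed.

Lemma prefix_size (s u : seq T) : prefix s u -> size s <= size u.
Proof. by move/prefixP=> [t ->]; rewrite size_cat leq_addr. Qed.

Lemma pre_inf (s u : seq T) : prefix s u -> infix s u.
Proof. by case/prefixP=> t ->; apply: prefix_infix. Qed.

Lemma extend_cover (u s : seq T) p j : is_period u p -> 0 < p -> p <= j <= size u ->
  covers s (take j u) -> left_seed s u.
Proof.
move=> Hper Hp /andP[Hpj Hjn] Hc.
set g := fun i => nth x0 u (i %% p).
have Hg : forall i, i < size u -> nth x0 u i = g i.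
  elim/ltn_ind=> i IH Hi; rewrite /g.
  case: (ltnP i p) => Hip; first by rewrite modn_small.
  have E : i = (i - p) + p by lia.
  rewrite E modnDr -(@periodP u p Hper); last lia.
  by rewrite IH; [|lia|lia].
have gS : forall a, g (a + p) = g a by move=> a; rewrite /g modnDr.
have Htj : size (take j u) = j by rewrite size_takel.
have Hpre : prefix s (take j u) by apply: covers_prefix => //; lia.
have Hpu : prefix s u := prefix_trans Hpre (prefix_take u j).
have Hsj : size s <= j by rewrite -Htj prefix_size.
have occ_base : forall i, i < j -> exists a, [/\ a + size s <= j,
     (forall t, t < size s -> g (a+t) = nth x0 s t) & a <= i < a + size s].
  move=> i Hi; have [a [H1 H2 H3]] := (coversP s (take j u)).1 Hc i (ltac:(by rewrite Htj)).
  exists a; split=> //; first by rewrite -Htj.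
  move=> t Ht; rewrite -H2 // nth_take; last by rewrite Htj in H1; lia.
  by rewrite Hg //; rewrite Htj in H1; lia.
have occk : forall k i, i < j + k * p -> exists a, [/\ a + size s <= j + k * p,
     (forall t, t < size s -> g (a+t) = nth x0 s t) & a <= i < a + size s].
  elim=> [|k IH] i Hi.
    have [a [H1 H2 H3]] := occ_base i (ltac:(lia)); exists a; split=> //; lia.
  case: (ltnP i (j + k * p)) => Hik.
    have [a [H1 H2 H3]] := IH i Hik; exists a; split=> //; lia.
  have [a [H1 H2 H3]] := IH (i - p) (ltac:(lia)).
  exists (a + p); split; [lia| |lia].
  move=> t Ht; rewrite -H2 // addnAC gS //.
set w := mkseq g (j + size u * p).
have Hw : size w = j + size u * p by rewrite size_mkseq.
split; last exact: Hpu.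
split; first exact: pre_inf Hpu.
exists w; split.
- apply/coversP=> i; rewrite Hw => Hi.
  have [a [H1 H2 H3]] := occk _ i Hi; exists a; split; [by [] | | by []].
  by move=> t Ht; rewrite nth_mkseq ?H2 //; lia.
- apply: pre_inf; rewrite prefixE; apply/eqP.
  apply: (eq_from_nth (x0:=x0)).
    by rewrite size_takel // Hw; nia.
  move=> i; rewrite size_takel ?Hw; last nia.
  by move=> Hi; rewrite nth_take // nth_mkseq ?Hg //; nia.
Qed.

Lemma seed_prefix_cover (u s : seq T) : 0 < size u -> left_seed s u ->
  exists j, per u <= j <= size u /\ covers s (take j u).
Proof.
move=> Hn [[_ [w [Hcw /infixP [w1 [w2 Ew]]]]] Hpu].
have Hln : size s <= size u := @prefix_size s u Hpu.
have Hwu : forall i, i < size u -> nth x0 w (size w1 + i) = nth x0 u i.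
  by move=> i Hi; rewrite Ew nth_cat ltnNge leq_addr /= addKn nth_cat Hi.
have Hsw : size w = size w1 + size u + size w2 by rewrite Ew !size_cat addnA.
have [Hpp Hpmin] := per_spec u.
have Hpern : per u <= size u.
  apply: Hpmin; apply: period_intro => // i Hi; lia.
pose P := fun j => (j <= size u) && `[< covers s (take j u) >].
have exP : exists j, P j.
  exists (size s); rewrite /P Hln /=; apply/asboolP.
  by move: Hpu; rewrite prefixE => /eqP ->; apply: covers_refl.
have ubP : forall j, P j -> j <= size u by move=> j /andP[].
case: (ex_maxnP exP ubP) => j /andP [Hjn /asboolP Hcj] Hmax.
have Hlj : size s <= j.
  apply: Hmax; rewrite /P Hln /=; apply/asboolP.
  by move: Hpu; rewrite prefixE => /eqP ->; apply: covers_refl.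
have Htj : size (take j u) = j by rewrite size_takel.
case: (ltnP j (size u)) => Hjn'; last first.
  exists j; split=> //; apply/andP; split; lia.
have [c [H1 H2 H3]] := (coversP s w).1 Hcw (size w1 + j) (ltac:(lia)).
have Hco : size w1 <= c by lia.
case: (leqP (c + size s) (size w1 + size u)) => Hend.
- (* contradiction with maximality *)
  have [b Hb] : exists b, c = size w1 + b by exists (c - size w1); lia.
  have : b + size s <= j.
    apply: Hmax; rewrite /P; apply/andP; split; first lia.
    apply/asboolP/coversP=> i; rewrite size_takel; last lia.
    move=> Hi; case: (ltnP i j) => Hij.
      have [a [A1 A2 A3]] := (coversP s (take j u)).1 Hcj i (ltac:(by rewrite Htj)).
      rewrite Htj in A1.
      exists a; split; [lia | | by []].
      move=> t Ht; rewrite -A2 // !nth_take //; lia.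
    exists b; split; [lia | | lia].
    move=> t Ht; rewrite nth_take; last lia.
    rewrite -Hwu; last lia.
    rewrite -H2 //; congr nth; lia.
  lia.
- exists j; split; last by [].
  rewrite Hjn andbT; apply: leq_trans (_ : c - size w1 <= j); last lia.
  apply: Hpmin; apply: period_intro; first lia.
  move=> i Hi.
  rewrite (@prefix_nth s u Hpu i); last lia.
  rewrite -Hwu; last lia.
  rewrite -H2; last lia.
  congr nth; lia.
Qed.

End Aux.

Theorem lemma2 (T : eqType) (u : seq T) (hn : 0 < size u) :
  (exists2 j, per u <= j <= size u & lseed u = cover_array u j) /\
  (forall j, per u <= j <= size u -> lseed u <= cover_array u j).
Proof.
have [x0 _] : exists x0 : T, true by case: u hn => // a l _; exists a.
have [Hpp _] := per_spec _ u.
have Hp0 : 0 < per u by case/andP: Hpp.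
have partA : forall j, per u <= j <= size u -> lseed u <= cover_array u j.
  move=> j Hj; have [s [Hs Hc]] := cover_spec _ (take j u).
  rewrite /Defs.cover_array -Hs; apply: (@lseed_le _ u).
  exact: (@extend_cover _ x0 _ _ _ _ Hpp Hp0 Hj Hc).
split=> //.
have [s [Hs Hls]] := lseed_spec _ u.
have [j [Hj Hc]] := @seed_prefix_cover _ x0 _ _ hn Hls.
exists j => //; apply/eqP; rewrite eqn_leq partA //=.
by rewrite /Defs.cover_array -Hs; apply: (@cover_le _ _ s).
Qed.
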